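(* Let $X$ be a uniformly convex, uniformly smooth real Banach space. Every closed convex cone $K\subseteq X$ has a convex polar $K^\circ$ if and only if every wedge $W(a,b)$ ($a,b\in S^*$, $b\notin\{a,-a\}$) has a convex polar.
   Context: $X^*$ is the norm dual of $X$ with pairing $\langle\cdot,\cdot\rangle$ and $S^*=\{c\in X^*:\|c\|_{X^*}=1\}$. For $a,b\in S^*$, $b\notin\{a,-a\}$, $\delta(a,b)=\{(\lambda a+\mu b)/\|\lambda a+\mu b\|_{X^*}:\lambda,\mu\ge0,(\lambda,\mu)\ne(0,0)\}$, and the wedge is $W(a,b)=\{x\in X:\langle c,x\rangle\le 0\ \forall c\in\delta(a,b)\}$. For a closed convex cone $K$, the metric projection is $P_Kx=\operatorname{argmin}\{\|x-k\|:k\in K\}$ (well defined and single valued here) and the polar is $K^\circ=\{x\in X:P_Kx=0\}$. *)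

(* Defs.v *)
From HB Require Import structures.
From mathcomp Require Import all_boot all_order all_algebra.
From mathcomp Require Import all_classical all_reals.
From mathcomp Require Import topology normedtype.
Set Implicit Arguments. Unset Strict Implicit. Unset Printing Implicit Defensive.
Import Order.TTheory GRing.Theory Num.Theory.
Import numFieldNormedType.Exports.
Local Open Scope classical_set_scope.
Local Open Scope ring_scope.

Section Defs.
Context {R : realType} {X : normedModType R}.

Definition uniformly_convex : Prop :=
  forall eps : R, 0 < eps -> eps <= 2 ->
    exists2 delta : R, 0 < delta &
      forall x y : X, `|x| <= 1 -> `|y| <= 1 -> eps <= `|x - y| ->
        `|2^-1 *: (x + y)| <= 1 - delta.

(** Uniform smoothness (modulus of smoothness rho(t) = o(t)):
    for every eps > 0 there is delta > 0 with
    ||x|| = 1, ||y|| <= delta  ==>  ||x+y|| + ||x-y|| <= 2 + eps ||y||. *)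
Definition uniformly_smooth : Prop :=
  forall eps : R, 0 < eps ->
    exists2 delta : R, 0 < delta &
      forall x y : X, `|x| = 1 -> `|y| <= delta ->
        `|x + y| + `|x - y| <= 2 + eps * `|y|.

Definition dual : set (X -> R) :=
  [set c | (forall (a : R) (u v : X), c (a *: u + v) = a * c u + c v)
           /\ continuous c].

Definition dnorm (c : X -> R) : R :=
  sup [set `|c x| | x in [set x : X | `|x| <= 1]].

Definition Sstar : set (X -> R) := [set c | dual c /\ dnorm c = 1].

Definition delta_ab (a b : X -> R) : set (X -> R) :=
  [set c | exists (l m : R), [/\ 0 <= l, 0 <= m, (l, m) != (0, 0) &
      c = (fun x => (l * a x + m * b x) /
                    dnorm (fun y => l * a y + m * b y))]].

Definition wedge (a b : X -> R) : set X :=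
  [set x | forall c, delta_ab a b c -> c x <= 0].

Definition convex_set_ (A : set X) : Prop :=
  forall x y : X, A x -> A y -> forall t : R, 0 <= t -> t <= 1 ->
    A (t *: x + (1 - t) *: y).

Definition cone (K : set X) : Prop :=
  K 0 /\ forall (t : R) (x : X), 0 <= t -> K x -> K (t *: x).

Definition closed_convex_cone (K : set X) : Prop :=
  closed K /\ convex_set_ K /\ cone K.

Definition argmin_dist (K : set X) (x : X) : set X :=
  [set p | K p /\ forall k, K k -> `|x - p| <= `|x - k|].

(** Polar: K^o = { x | P_K x = 0 }, i.e. the argmin is exactly {0}. *)
Definition polar (K : set X) : set X :=
  [set x | argmin_dist K x = [set 0]].

End Defs.

(* Main.v *)
Require Import Defs.
From HB Require Import structures.
From mathcomp Require Import all_boot all_order all_algebra.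
From mathcomp Require Import all_classical all_reals.
From mathcomp Require Import topology normedtype.
From mathcomp Require Import ring lra.
Import Order.TTheory GRing.Theory Num.Theory.
Import numFieldNormedType.Exports.
Local Open Scope classical_set_scope.
Local Open Scope ring_scope.

Section H.
Context {R : realType} {X : normedModType R}.

Definition islin (c : X -> R) := forall (a : R) (u v : X), c (a *: u + v) = a * c u + c v.

Lemma lin0 c : islin c -> c 0 = 0.
Proof. move=> L; have := L 1 0 0; rewrite scale1r addr0 mul1r => h; lra. Qed.

Lemma linZ c : islin c -> forall a u, c (a *: u) = a * c u.
Proof. by move=> L a u; rewrite -[a *: u]addr0 L lin0 // addr0. Qed.

Lemma linD c : islin c -> forall u v, c (u + v) = c u + c v.
Proof. by move=> L u v; rewrite -[u]scale1r L mul1r scale1r. Qed.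

Lemma linN c : islin c -> forall u, c (- u) = - c u.
Proof. by move=> L u; rewrite -scaleN1r linZ // mulN1r. Qed.

Lemma linB c : islin c -> forall u v, c (u - v) = c u - c v.
Proof. by move=> L u v; rewrite linD // linN. Qed.

Lemma lin_cont (f : X -> R) (M : R) : islin f -> 0 <= M ->
  (forall v, `|f v| <= M * `|v|) -> continuous f.
Proof.
move=> L M0 B x; apply/cvgrPdist_lt => e e0.
have hM : 0 < e / (M + 1) by apply: divr_gt0 => //; lra.
near=> t.
rewrite -linB //; apply: (le_lt_trans (B _)).
have : `|x - t| < e / (M + 1) by near: t; have := @near_ball _ _ x _ hM; apply: filterS => t; by rewrite -ball_normE.
move=> h.
have h1 : M * `|x - t| <= M * (e / (M + 1)) by rewrite ler_wpM2l // ltW.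
apply: (le_lt_trans h1).
rewrite mulrA ltr_pdivrMr; last lra.
nra.
Unshelve. all: by end_near.
Qed.

Lemma SC : @uniformly_convex R X -> forall (r : R) (u w : X),
  `|u| <= r -> `|w| <= r -> u != w -> `|2^-1 *: (u + w)| < r.
Proof.
move=> UC r u w hu hw uw.
have r0 : 0 < r.
  rewrite ltNge; apply/negP => r0.
  have u0 : u = 0 by apply/normr0_eq0/eqP; rewrite eq_le normr_ge0 andbT (le_trans hu).
  have w0 : w = 0 by apply/normr0_eq0/eqP; rewrite eq_le normr_ge0 andbT (le_trans hw).
  by move: uw; rewrite u0 w0 eqxx.
have nr : `|r^-1| = r^-1 by rewrite ger0_norm // invr_ge0 ltW.
set u' := r^-1 *: u; set w' := r^-1 *: w.
have hu' : `|u'| <= 1 by rewrite normrZ nr ler_pdivrMl // mulr1.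
have hw' : `|w'| <= 1 by rewrite normrZ nr ler_pdivrMl // mulr1.
have e0 : 0 < `|u' - w'|.
  rewrite normr_gt0 subr_eq0; apply: contra uw => /eqP h.
  have := congr1 (fun v => r *: v) h; rewrite /u' /w' !scalerA mulfV ?gt_eqF // !scale1r.
  by move=> ->.
have e2 : `|u' - w'| <= 2.
  by apply: (le_trans (ler_normB _ _)); lra.
have [d d0 Hd] := UC _ e0 e2.
have := Hd u' w' hu' hw' (lexx _).
have -> : 2^-1 *: (u' + w') = r^-1 *: (2^-1 *: (u + w)).
  by rewrite /u' /w' -scalerDr !scalerA mulrC.
rewrite normrZ nr ler_pdivrMl //.
move=> h; apply: (le_lt_trans h); nra.
Qed.

Lemma dnorm_ge0 (c : X -> R) : 0 <= @dnorm R X c.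
Proof.
rewrite /dnorm; set E := (X in sup X).
have E0 : E `|c 0| by exists 0 => //=; rewrite normr0 ler01.
case: (pselect (has_sup E)) => h.
  exact: le_trans (normr_ge0 _) (sup_upper_bound h E0).
by rewrite sup_out.
Qed.

Lemma dnorm_le (c : X -> R) : islin c -> @dnorm R X c = 1 ->
  forall v, `|c v| <= `|v|.
Proof.
rewrite /dnorm; set E := (X in sup X) => L h1 v.
have hs : has_sup E.
  by apply: contrapT => hn; move: h1; rewrite sup_out // => /eqP; rewrite eq_sym oner_eq0.
have [->|v0] := eqVneq v 0; first by rewrite lin0 // !normr0.
have nv : 0 < `|v| by rewrite normr_gt0.
have Ew : E `|c (`|v|^-1 *: v)|.
  exists (`|v|^-1 *: v) => //=.
  by rewrite normrZ ger0_norm ?invr_ge0 ?normr_ge0 // mulVf ?gt_eqF.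
have := sup_upper_bound hs Ew; rewrite h1 linZ // normrM ger0_norm ?invr_ge0 ?normr_ge0 //.
by rewrite ler_pdivrMl // mulr1.
Qed.

Lemma dnorm_eq1 (c : X -> R) (x : X) : (forall v, `|c v| <= `|v|) ->
  `|x| = 1 -> c x = 1 -> @dnorm R X c = 1.
Proof.
rewrite /dnorm; set E := (X in sup X) => B nx cx.
have Ex : E 1 by exists x; rewrite /= ?nx // cx normr1.
have ub : ubound E 1 by move=> _ [y /= hy <-]; exact: le_trans (B y) hy.
apply/eqP; rewrite eq_le; apply/andP; split.
  by apply: ge_sup => //; exists 1.
by apply: sup_upper_bound => //; split; [exists 1 | exists 1].
Qed.

Lemma polarI (K : set X) z : K 0 -> (forall k, K k -> `|z| <= `|z - k|) ->
  (forall p, K p -> `|z - p| <= `|z| -> p = 0) -> polar K z.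
Proof.
move=> K0 Hm Hu; rewrite /polar; apply/seteqP; split => p /=.
  by case=> Kp Hp; apply: Hu => //; have := Hp 0 K0; rewrite subr0.
by move=> ->; split => // k Kk; rewrite subr0; apply: Hm.
Qed.

Lemma polar_min {K : set X} {z} : polar K z -> K 0 /\ forall k, K k -> `|z| <= `|z - k|.
Proof.
rewrite /polar => h; have : argmin_dist K z 0 by rewrite h.
by case=> K0 H; split => // k Kk; rewrite -[z in X in X <= _]subr0; apply: H.
Qed.

Lemma polar_uniq {K : set X} {z} : polar K z -> forall p, K p ->
  (forall k, K k -> `|z - p| <= `|z - k|) -> p = 0.
Proof.
rewrite /polar => h p Kp H; have : argmin_dist K z p by split.
by rewrite h.
Qed.

Lemma polar_scale (K : set X) x s : cone K -> polar K x -> 0 <= s -> polar K (s *: x).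
Proof.
move=> [K0 KZ] px s0; have [_ Hm] := polar_min px.
have [->|sn0] := eqVneq s 0.
  rewrite scale0r; apply: polarI => //.
    by move=> k _; rewrite normr0 normr_ge0.
  move=> p _; rewrite sub0r normrN normr0 => h.
  by apply/normr0_eq0/eqP; rewrite eq_le h normr_ge0.
have sp : 0 < s by rewrite lt_neqAle eq_sym sn0 s0.
have E k : s *: x - k = s *: (x - s^-1 *: k).
  by rewrite scalerBr scalerA mulfV // scale1r.
have Ki k : K k -> K (s^-1 *: k) by move=> Kk; apply: KZ => //; rewrite invr_ge0.
apply: polarI => //.
  move=> k Kk; rewrite E !normrZ ger0_norm //.
  by rewrite ler_wpM2l //; apply: Hm; exact: Ki.
move=> p Kp h.
have : s^-1 *: p = 0.
  apply: (polar_uniq px _ (Ki _ Kp)) => k Kk.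
  apply: (le_trans _ (Hm _ Kk)).
  move: h; rewrite E !normrZ ger0_norm // => h.
  by rewrite -(ler_pM2l sp).
by move/eqP; rewrite scaler_eq0 invr_eq0 (negbTE sn0) /= => /eqP.
Qed.

Lemma polar_L1 (K : set X) z (c : X -> R) : @uniformly_convex R X -> K 0 ->
  (forall p, K p -> K (2^-1 *: p)) -> islin c -> (forall k, K k -> c k <= 0) ->
  (forall v, `|c v| <= `|v|) -> c z = `|z| -> polar K z.
Proof.
move=> UC K0 K2 L cK B cz.
have Hm k : K k -> `|z| <= `|z - k|.
  move=> Kk; apply: le_trans (le_trans (ler_norm _) (B _)).
  by rewrite linB // cz; have := cK _ Kk; lra.
apply: polarI => // p Kp h.
apply: contrapT => /eqP p0.
have zp : z != z - p.
  apply: contra p0 => /eqP e; apply/eqP.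
  by rewrite -(subrr z) {2}e opprB addrC subrK.
have := SC UC _ _ _ (lexx `|z|) h zp.
have -> : 2^-1 *: (z + (z - p)) = z - 2^-1 *: p.
  rewrite scalerDr scalerBr addrA -scalerDl.
  have -> : (2^-1 + 2^-1 : R) = 1 by lra.
  by rewrite scale1r.
by rewrite ltNge (Hm _ (K2 _ Kp)).
Qed.

Section Deriv.
Variable x : X.
Hypothesis hx : `|x| = 1.

Definition q (v : X) (t : R) := (`|x + t *: v| - 1) / t.
Definition Qs (v : X) := [set q v t | t in [set t : R | 0 < t]].
Definition D (v : X) := inf (Qs v).

Lemma q_lb v t : 0 < t -> - `|v| <= q v t.
Proof.
move=> t0; rewrite /q ler_pdivlMr //.
have := ler_normB (x + t *: v) (t *: v); rewrite addrK hx normrZ gtr0_norm //.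
nra.
Qed.

Lemma q_ub v t : 0 < t -> q v t <= `|v|.
Proof.
move=> t0; rewrite /q ler_pdivrMr //.
have := ler_normD x (t *: v); rewrite hx normrZ gtr0_norm //.
nra.
Qed.

Lemma q_mono v s t : 0 < s -> s <= t -> q v s <= q v t.
Proof.
move=> s0 st; have t0 : 0 < t by apply: lt_le_trans st.
set l := s / t.
have l0 : 0 < l by apply: divr_gt0.
have l1 : l <= 1 by rewrite /l ler_pdivrMr // mul1r.
have E : x + s *: v = (1 - l) *: x + l *: (x + t *: v).
  rewrite scalerDr scalerA /l mulfVK ?gt_eqF // addrA -scalerDl.
  by rewrite subrK scale1r.
have h : `|x + s *: v| <= (1 - l) + l * `|x + t *: v|.
  have n1 : `|(1 - l) *: x| = 1 - l by rewrite normrZ hx mulr1 ger0_norm //; lra.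
  have n2 : `|l *: (x + t *: v)| = l * `|x + t *: v|.
    by rewrite normrZ (ger0_norm (ltW l0)).
  by rewrite E; apply: le_trans (ler_normD _ _) _; rewrite n1 n2.
have h2 : `|x + s *: v| - 1 <= l * (`|x + t *: v| - 1) by lra.
rewrite /q ler_pdivrMr // (le_trans h2) //.
rewrite /l mulrAC -mulrA [_ / t * _]mulrC mulrA.
by rewrite mulrAC.
Qed.

Lemma Qs_inf v : has_inf (Qs v).
Proof.
split; first by exists (q v 1); exists 1 => //=; exact: ltr01.
by exists (- `|v|) => _ [t /= t0 <-]; apply: q_lb.
Qed.

Lemma D_lb v t : 0 < t -> D v <= q v t.
Proof. by move=> t0; apply: ge_inf; [case: (Qs_inf v) | exists t]. Qed.

Lemma D_adh v e : 0 < e -> exists2 t, 0 < t & forall s, 0 < s -> s <= t -> q v s < D v + e.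
Proof.
move=> e0; have [_ [t /= t0 <-] h] := inf_adherent e0 (Qs_inf v).
by exists t => // s s0 st; apply: le_lt_trans (q_mono v s t s0 st) h.
Qed.

Lemma D_ge v : - `|v| <= D v.
Proof.
apply: lb_le_inf; first by exists (q v 1); exists 1 => //=; exact: ltr01.
by move=> _ [t /= t0 <-]; apply: q_lb.
Qed.

Lemma D_le v : D v <= `|v|.
Proof. exact: le_trans (D_lb v 1 ltr01) (q_ub v 1 ltr01). Qed.

Lemma D_char v L : (forall t, 0 < t -> L <= q v t) ->
  (forall e, 0 < e -> exists2 t, 0 < t & q v t < L + e) -> D v = L.
Proof.
move=> H1 H2; apply/eqP; rewrite eq_le; apply/andP; split.
  apply/ler_addgt0Pr => e e0; have [t t0 h] := H2 e e0.
  exact: le_trans (D_lb v t t0) (ltW h).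
apply: lb_le_inf; first by exists (q v 1); exists 1 => //=; exact: ltr01.
by move=> _ [t /= t0 <-]; apply: H1.
Qed.

Lemma two_adh u v e : 0 < e -> exists2 t, 0 < t & q u t < D u + e /\ q v t < D v + e.
Proof.
move=> e0; have [t1 t10 h1] := D_adh u e e0; have [t2 t20 h2] := D_adh v e e0.
exists (Order.min t1 t2); first by rewrite lt_min t10 t20.
split; [apply: h1 | apply: h2]; rewrite ?lt_min ?t10 ?t20 ?ge_min ?lexx ?orbT //.
Qed.

Lemma D_sub u v : D (u + v) <= D u + D v.
Proof.
apply/ler_addgt0Pr => e e0.
have e20 : 0 < e / 2 by apply: divr_gt0.
have [t t0 [h1 h2]] := two_adh u v _ e20.
have t20 : 0 < t / 2 by apply: divr_gt0.
apply: le_trans (D_lb (u + v) _ t20) _.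
have hn : `|x + (t / 2) *: (u + v)| <= 2^-1 * (`|x + t *: u| + `|x + t *: v|).
  have -> : x + (t / 2) *: (u + v) = 2^-1 *: ((x + t *: u) + (x + t *: v)).
    rewrite !scalerDr !scalerA [2^-1 * t]mulrC addrACA -scalerDl.
    have -> : (2^-1 + 2^-1 : R) = 1 by lra.
    by rewrite scale1r.
  by rewrite normrZ ger0_norm ?invr_ge0 // ler_wpM2l ?invr_ge0 // ler_normD.
have : q (u + v) (t / 2) <= q u t + q v t.
  rewrite /q ler_pdivrMr // mulrDl !mulrA !mulfVK ?gt_eqF //.
  suff : (`|x + t / 2 *: (u + v)| - 1) <= ((`|x + t *: u| - 1) + (`|x + t *: v| - 1)) / 2 by lra.
  lra.
by move: h1 h2; lra.
Qed.

Lemma D_oddge u : 0 <= D u + D (- u).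
Proof.
apply/ler_addgt0Pr => e e0.
have e20 : 0 < e / 2 by apply: divr_gt0.
have [t t0 [h1 h2]] := two_adh u (- u) _ e20.
suff : 0 <= q u t + q (- u) t by move: h1 h2; lra.
rewrite /q -mulrDl; apply: divr_ge0; last exact: ltW.
have : `|(x + t *: u) + (x + t *: - u)| <= `|x + t *: u| + `|x + t *: - u| by apply: ler_normD.
rewrite scalerN addrACA subrr addr0 -mulr2n -scaler_nat normrZ hx mulr1.
by rewrite ger0_norm // => h; lra.
Qed.

Lemma D_oddle u : @uniformly_smooth R X -> D u + D (- u) <= 0.
Proof.
move=> US; apply/ler_addgt0Pr => e e0.
have nu0 : 0 < `|u| + 1 by have := normr_ge0 u; lra.
set e' := e / (`|u| + 1).
have e'0 : 0 < e' by apply: divr_gt0.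
have [d d0 Hd] := US e' e'0.
set t := d / (`|u| + 1).
have t0 : 0 < t by apply: divr_gt0.
have ntu : `|t *: u| = t * `|u| by rewrite normrZ gtr0_norm.
have htu : `|t *: u| <= d.
  rewrite ntu /t mulrAC ler_pdivrMr //; have := normr_ge0 u; nra.
have := Hd x (t *: u) hx htu; rewrite ntu => hus.
have h1 := D_lb u t t0; have h2 := D_lb (- u) t t0.
have hq : q u t + q (- u) t <= e' * `|u|.
  rewrite /q -mulrDl ler_pdivrMr // scalerN.
  by move: hus; nra.
have he : e' * `|u| <= e.
  rewrite /e' mulrAC ler_pdivrMr //; have := normr_ge0 u; nra.
lra.
Qed.

Lemma DN u : @uniformly_smooth R X -> D (- u) = - D u.
Proof. by move=> US; have := D_oddge u; have := D_oddle u US; lra. Qed.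

Lemma D_add u v : @uniformly_smooth R X -> D (u + v) = D u + D v.
Proof.
move=> US; apply/eqP; rewrite eq_le D_sub /=.
have := D_sub (u + v) (- v); rewrite addrK DN //; lra.
Qed.

Lemma q_scale u s t : 0 < s -> 0 < t -> q (s *: u) t = s * q u (s * t).
Proof.
move=> s0 t0; rewrite /q scalerA [t * s]mulrC.
field; rewrite ?gt_eqF //.
Qed.

Lemma D_pos u s : 0 < s -> D (s *: u) = s * D u.
Proof.
move=> s0; apply: D_char.
  move=> t t0; have st0 : 0 < s * t by apply: mulr_gt0.
  by rewrite q_scale //; apply: ler_wpM2l; [exact: ltW | exact: D_lb].
move=> e e0; have es0 : 0 < e / s by apply: divr_gt0.
have [t t0 h] := D_adh u _ es0.
exists (t / s); first by apply: divr_gt0.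
rewrite q_scale ?divr_gt0 // [s * (t / s)]mulrCA mulfV ?gt_eqF // mulr1.
have := h t t0 (lexx t) => h'.
have -> : s * D u + e = s * (D u + e / s) by rewrite mulrDr mulrCA mulfV ?gt_eqF // mulr1.
by rewrite ltr_pM2l.
Qed.

Lemma D0 : @uniformly_smooth R X -> D 0 = 0.
Proof. by move=> US; have := D_add 0 0 US; rewrite addr0; lra. Qed.

Lemma DZ a u : @uniformly_smooth R X -> D (a *: u) = a * D u.
Proof.
move=> US; have [a0|a0|->] := ltgtP a 0.
- have na : 0 < - a by rewrite oppr_gt0.
  by rewrite -[a]opprK scaleNr (DN _ US) (D_pos _ _ na); lra.
- exact: D_pos.
- by rewrite scale0r D0 // mul0r.
Qed.

Lemma D_lin : @uniformly_smooth R X -> islin D.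
Proof. by move=> US a u v; rewrite D_add // DZ. Qed.

Lemma D_bound v : `|D v| <= `|v|.
Proof. by rewrite ler_norml D_ge D_le. Qed.

Lemma D_x : D x = 1.
Proof.
apply: D_char.
  move=> t t0; rewrite /q -{1}[x]scale1r -scalerDl normrZ hx mulr1 ger0_norm; last lra.
  by rewrite addrAC subrr add0r mulfV ?gt_eqF.
move=> e e0; exists 1; first exact: ltr01.
rewrite /q -{1}[x]scale1r -scalerDl normrZ hx mulr1 ger0_norm; last lra.
rewrite invr1 mulr1; lra.
Qed.

Lemma D_cone (K : set X) : @uniformly_smooth R X -> cone K -> polar K x -> forall k, K k -> D k <= 0.
Proof.
move=> US [K0 KZ] px k Kk.
suff : 0 <= D (- k) by rewrite DN //; lra.
apply: lb_le_inf; first by exists (q (- k) 1); exists 1 => //=; exact: ltr01.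
move=> _ [t /= t0 <-]; rewrite /q; apply: divr_ge0; last exact: ltW.
have [_ Hm] := polar_min px.
have := Hm (t *: k) (KZ _ _ (ltW t0) Kk).
by rewrite hx scalerN; lra.
Qed.
End Deriv.

Lemma delta_lin (a b c : X -> R) : islin a -> islin b -> @delta_ab R X a b c -> islin c.
Proof.
move=> La Lb [l [m [l0 m0 _ ->]]] s u v /=.
rewrite La Lb; set d := dnorm _.
ring.
Qed.

Lemma delta_bound (a b c : X -> R) : (forall v, `|a v| <= `|v|) ->
  (forall v, `|b v| <= `|v|) -> @delta_ab R X a b c ->
  exists2 M, 0 <= M & forall v, `|c v| <= M * `|v|.
Proof.
move=> Ba Bb [l [m [l0 m0 _ ->]]]; set d := dnorm _.
have d0 : 0 <= d by apply: dnorm_ge0.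
exists ((l + m) / d); first by apply: divr_ge0 => //; lra.
move=> v /=; rewrite normrM (ger0_norm (x := d^-1)) ?invr_ge0 //.
rewrite mulrAC ler_wpM2r ?invr_ge0 //.
apply: le_trans (ler_normD _ _) _.
rewrite !normrM (ger0_norm l0) (ger0_norm m0) mulrDl.
by apply: lerD; apply: ler_wpM2l.
Qed.

Lemma wedge_ccc (a b : X -> R) : @Sstar R X a -> @Sstar R X b -> closed_convex_cone (@wedge R X a b).
Proof.
move=> [[La Ca] na] [[Lb Cb] nb].
have Ba := dnorm_le a La na; have Bb := dnorm_le b Lb nb.
split; [|split].
- have -> : wedge a b = \bigcap_(c in delta_ab a b) (c @^-1` [set r : R | r <= 0]).
    by apply/seteqP; split => x h c hc; exact: h.
  apply: closed_bigI => c hc; apply: preimage_closed; last exact: closed_le.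
  move=> x _; have [M M0 BM] := delta_bound _ _ _ Ba Bb hc.
  exact: (lin_cont _ _ (delta_lin _ _ _ La Lb hc) M0 BM).
- move=> x y hx hy t t0 t1 c hc; have Lc := delta_lin _ _ _ La Lb hc.
  rewrite linD // !linZ //; have := hx c hc; have := hy c hc; nra.
- split; first by move=> c hc; rewrite (lin0 _ (delta_lin _ _ _ La Lb hc)).
  move=> t x t0 hx c hc; rewrite (linZ _ (delta_lin _ _ _ La Lb hc)); have := hx c hc; nra.
Qed.

Lemma a_in_delta (a b : X -> R) : @dnorm R X a = 1 -> @delta_ab R X a b a.
Proof.
move=> na; exists 1, 0; split; [exact: ler01 | exact: lexx | |].
  by apply/negP => /eqP [/eqP]; rewrite oner_eq0.
have E : (fun y => 1 * a y + 0 * b y) = a by apply/funext => y; rewrite mul1r mul0r addr0.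
by rewrite E na; apply/funext => y; rewrite mul1r mul0r addr0 divr1.
Qed.

Lemma sub_wedge (a b : X -> R) (K : set X) : islin a -> islin b ->
  (forall k, K k -> a k <= 0) -> (forall k, K k -> b k <= 0) -> K `<=` @wedge R X a b.
Proof.
move=> La Lb ha hb k Kk c [l [m [l0 m0 _ ->]]] /=.
apply: mulr_le0_ge0; last by rewrite invr_ge0 dnorm_ge0.
have := ha k Kk; have := hb k Kk; nra.
Qed.

Lemma polar_sub (K W : set X) z : K 0 -> K `<=` W -> polar W z -> polar K z.
Proof.
move=> K0 KW pz; have [W0 Hm] := polar_min pz.
apply: polarI => //; first by move=> k Kk; apply: Hm; apply: KW.
move=> p Kp h; apply: (polar_uniq pz _ (KW _ Kp)) => k Wk.
by apply: le_trans h _; apply: Hm.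
Qed.

Lemma b_in_delta (a b : X -> R) : @dnorm R X b = 1 -> @delta_ab R X a b b.
Proof.
move=> nb; exists 0, 1; split; [exact: lexx | exact: ler01 | |].
  by rewrite xpair_eqE oner_eq0 andbF.
have E : (fun y => 0 * a y + 1 * b y) = b by apply/funext => y; rewrite mul1r mul0r add0r.
by rewrite E nb; apply/funext => y; rewrite mul1r mul0r add0r divr1.
Qed.

Lemma norming (K : set X) x : @uniformly_smooth R X -> cone K -> polar K x -> x != 0 ->
  exists a : X -> R, [/\ @Sstar R X a, islin a, (forall k, K k -> a k <= 0),
     (forall v, `|a v| <= `|v|) & a x = `|x|].
Proof.
move=> US cK px x0.
have nx : 0 < `|x| by rewrite normr_gt0.
set x1 := `|x|^-1 *: x.
have hx1 : `|x1| = 1 by rewrite normrZ ger0_norm ?invr_ge0 ?normr_ge0 // mulVf ?gt_eqF.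
have px1 : polar K x1 by apply: polar_scale => //; rewrite invr_ge0 normr_ge0.
have L := D_lin x1 hx1 US.
have B := D_bound x1 hx1.
exists (D x1); split => //.
- split; last exact: (dnorm_eq1 _ x1 B hx1 (D_x x1 hx1)).
  split; [exact: L | apply: (lin_cont _ _ L ler01) => v; rewrite mul1r; exact: B].
- exact: (D_cone x1 hx1 K US cK px1).
- have -> : x = `|x| *: x1 by rewrite /x1 scalerA mulfV ?gt_eqF // scale1r.
  rewrite (linZ _ L) (D_x x1 hx1) mulr1; rewrite normrZ hx1 mulr1 normr_id //.
Qed.
End H.
Lemma le_of_eq1 {R : realType} {u v : R} : u = v -> u <= v.
Proof. by move=> ->. Qed.

Theorem mainTheorem7 (R : realType) (X : completeNormedModType R) :
  @uniformly_convex R X -> @uniformly_smooth R X ->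
  ((forall K : set X, closed_convex_cone K -> convex_set_ (polar K)) <->
   (forall a b : X -> R, Sstar a -> Sstar b ->
      b <> a -> b <> (fun x => - a x) -> convex_set_ (polar (wedge a b)))).
Proof.
move=> UC US; split.
  by move=> hK a b Sa Sb _ _; apply: hK; exact: wedge_ccc.
move=> hW K [_ [_ cK]] x y px py t t0 t1.
have [K0 KZ] := cK.
have K2 p : K p -> K (2^-1 *: p) by move=> Kp; apply: KZ => //; rewrite invr_ge0 ler0n.
have [->|x0] := eqVneq x 0.
  by rewrite scaler0 add0r; apply: polar_scale => //; lra.
have [->|y0] := eqVneq y 0.
  by rewrite scaler0 addr0; exact: polar_scale.
have [a [Sa La aK Ba ax]] := norming K x US cK px x0.
have [b [Sb Lb bK Bb bY]] := norming K y US cK py y0.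
have nx : 0 < `|x| by rewrite normr_gt0.
have ny : 0 < `|y| by rewrite normr_gt0.
have [ba|nba] := pselect (b = a).
  subst b; apply: (polar_L1 _ _ _ UC K0 K2 La aK Ba).
  apply/eqP; rewrite eq_le; apply/andP; split.
    exact: le_trans (ler_norm _) (Ba _).
  rewrite (linD _ La) !(linZ _ La) ax bY.
  apply: le_trans (ler_normD _ _) _.
  by rewrite !normrZ !ger0_norm //; lra.
have [bna|nbna] := pselect (b = (fun v => - a v)).
  set x1 := `|x|^-1 *: x; set y1 := `|y|^-1 *: y.
  have hx1 : `|x1| = 1 by rewrite normrZ ger0_norm ?invr_ge0 ?normr_ge0 // mulVf ?gt_eqF.
  have hy1 : `|- y1| = 1 by rewrite normrN normrZ ger0_norm ?invr_ge0 ?normr_ge0 // mulVf ?gt_eqF.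
  have ax1 : a x1 = 1 by rewrite (linZ _ La) ax mulVf ?gt_eqF.
  have ay1 : a (- y1) = 1.
    by rewrite (linN _ La) -[- a y1]/((fun v => - a v) y1) -bna (linZ _ Lb) bY mulVf ?gt_eqF.
  have e : x1 = - y1.
    apply: contrapT => /eqP ne.
    have := SC UC 1 x1 (- y1) (le_of_eq1 hx1) (le_of_eq1 hy1) ne.
    have h3 := le_trans (ler_norm _) (Ba (2^-1 *: (x1 + - y1))).
    move: h3; rewrite (linZ _ La) (linD _ La) ax1 ay1 => h3 h; lra.
  have Ex : x = `|x| *: x1 by rewrite /x1 scalerA mulfV ?gt_eqF // scale1r.
  have Ey : y = - (`|y| *: x1) by rewrite e scalerN opprK /y1 scalerA mulfV ?gt_eqF // scale1r.
  clearbody x1 y1.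
  set r := t * `|x| - (1 - t) * `|y|.
  have Ez : t *: x + (1 - t) *: y = r *: x1.
    rewrite [in LHS]Ex [in LHS]Ey scalerN !scalerA -scaleNr -scalerDl /r; congr (_ *: _); ring.
  rewrite Ez.
  have [r0|r0] := leP 0 r.
    have -> : r *: x1 = (r / `|x|) *: x.
      by rewrite {2}Ex scalerA mulfVK ?gt_eqF.
    by apply: polar_scale => //; apply: divr_ge0 => //; exact: ltW.
  have -> : r *: x1 = (- r / `|y|) *: y.
    by rewrite {2}Ey scalerN scalerA mulfVK ?gt_eqF // scaleNr opprK.
  by apply: polar_scale => //; apply: divr_ge0; [lra | exact: ltW].
have hWab := hW a b Sa Sb nba nbna.
have [_ [_ [W0 WZ]]] := wedge_ccc _ _ Sa Sb.
have W2 p : wedge a b p -> wedge a b (2^-1 *: p).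
  by move=> Wp; apply: WZ => //; rewrite invr_ge0 ler0n.
have aW w : wedge a b w -> a w <= 0 by move=> hw; apply: hw; apply: a_in_delta; case: Sa.
have bW w : wedge a b w -> b w <= 0 by move=> hw; apply: hw; apply: b_in_delta; case: Sb.
have pxW := polar_L1 _ _ _ UC W0 W2 La aW Ba ax.
have pyW := polar_L1 _ _ _ UC W0 W2 Lb bW Bb bY.
apply: (polar_sub _ _ _ K0 (sub_wedge _ _ _ La Lb aK bK)).
exact: hWab.
Qed.
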